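(* Let $f,g$ satisfy (H1) (see context). For $\theta,H\in\Theta$ and $\gamma>0$ set $S_\gamma(\theta)=\mathrm{Prox}_\gamma(\theta-\gamma H)$ and $\eta=H-\nabla f(\theta)$. Then for any $\theta,H\in\Theta$ and $\gamma>0$, $\|T_\gamma(\theta)-S_\gamma(\theta)\|\le\gamma\|\eta\|$. Moreover, for any $\theta,H\in\Theta$ and $\gamma\in(0,1/L]$, $$|F(S_\gamma(\theta))-F(T_\gamma(\theta))|\le(1+c\gamma L)\|\eta\|\big(\gamma\|\eta\|+(1+c\gamma L)\|\theta-T_\gamma(\theta)\|\big),$$ where $c=0$ if $f$ is convex and $c=1$ otherwise.
   Context: $\Theta$ is a finite-dimensional Euclidean space with norm $\|\cdot\|$. (H1): $g:\Theta\to(-\infty,+\infty]$ convex, not identically $+\infty$, lower semicontinuous; $f:\Theta\to\mathbb R$ continuously differentiable with $L$-Lipschitz gradient. $F=f+g$; $\mathrm{Prox}_\gamma(\theta)=\mathrm{argmin}_{\vartheta}\{g(\vartheta)+\frac1{2\gamma}\|\vartheta-\theta\|^2\}$; $T_\gamma(\theta)=\mathrm{Prox}_\gamma(\theta-\gamma\nabla f(\theta))$. *)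

(* Defs.v *)
(* Theta is modelled as the Euclidean space R^n,
   realised as row vectors 'rV[R]_n with the standard inner product. *)
From HB Require Import structures.
From mathcomp Require Import all_boot all_order all_algebra.
From mathcomp Require Import all_classical all_reals all_analysis.
Set Implicit Arguments. Unset Strict Implicit. Unset Printing Implicit Defensive.
Import Order.TTheory GRing.Theory Num.Theory.
Import numFieldNormedType.Exports.
Local Open Scope ring_scope.

Section Defs.
Variables (R : realType) (n : nat).
Notation V := 'rV[R]_n.

Definition dotp (u v : V) : R := \sum_(i < n) u ord0 i * v ord0 i.
Definition enorm (v : V) : R := Num.sqrt (dotp v v).

Definition convex_fun (f : V -> R) : Prop :=
  forall (x y : V) (t : R), 0 <= t <= 1 ->
    f (t *: x + (1 - t) *: y) <= t * f x + (1 - t) * f y.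

Definition convex_efun (g : V -> \bar R) : Prop :=
  forall (x y : V) (t : R), 0 < t < 1 ->
    (g (t *: x + (1 - t) *: y)%R <= t%:E * g x + (1 - t)%R%:E * g y)%E.

Definition lsc (g : V -> \bar R) : Prop :=
  forall (x : V) (a : R), (a%:E < g x)%E ->
    \forall y \near x, (a%:E < g y)%E.

Definition proper_efun (g : V -> \bar R) : Prop :=
  (forall x, g x != -oo%E) /\ exists x, g x != +oo%E.

Definition is_gradient (f : V -> R) (grad : V -> V) : Prop :=
  forall x : V, differentiable f x /\ forall v : V, 'd f x v = dotp (grad x) v.

(* p is a point of Prox_gamma(theta) = argmin_v { g v + ||v - theta||^2/(2 gamma) } *)
Definition is_prox (g : V -> \bar R) (gamma : R) (theta p : V) : Prop :=
  forall v : V,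
    (g p + (enorm (p - theta)%R ^+ 2 / (2 * gamma))%R%:E
       <= g v + (enorm (v - theta)%R ^+ 2 / (2 * gamma))%R%:E)%E.

End Defs.

(* Main.v *)
Require Import Defs.
From HB Require Import structures.
From mathcomp Require Import all_boot all_order all_algebra.
From mathcomp Require Import all_classical all_reals all_analysis.
From mathcomp Require Import ring lra.
Import Order.TTheory GRing.Theory Num.Theory.
Import numFieldNormedType.Exports.
Local Open Scope ring_scope.

Set Implicit Arguments. Unset Strict Implicit. Unset Printing Implicit Defensive.
Lemma dotpC (R : realType) n (u v : 'rV[R]_n) : dotp u v = dotp v u.
Proof. by apply: eq_bigr => i _; rewrite mulrC. Qed.

Lemma dotpDl (R : realType) n (u w v : 'rV[R]_n) :
  dotp (u + w) v = dotp u v + dotp w v.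
Proof. by rewrite /dotp -big_split; apply: eq_bigr => i _; rewrite mxE mulrDl. Qed.

Lemma dotpZl (R : realType) n (a : R) (u v : 'rV[R]_n) :
  dotp (a *: u) v = a * dotp u v.
Proof. by rewrite /dotp mulr_sumr; apply: eq_bigr => i _; rewrite mxE mulrA. Qed.

Lemma dotpNl (R : realType) n (u v : 'rV[R]_n) : dotp (- u) v = - dotp u v.
Proof. by rewrite -scaleN1r dotpZl mulN1r. Qed.

Lemma dotpBl (R : realType) n (u w v : 'rV[R]_n) :
  dotp (u - w) v = dotp u v - dotp w v.
Proof. by rewrite dotpDl dotpNl. Qed.

Lemma dotpDr (R : realType) n (u w v : 'rV[R]_n) :
  dotp v (u + w) = dotp v u + dotp v w.
Proof. by rewrite dotpC dotpDl !(dotpC v). Qed.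

Lemma dotpZr (R : realType) n (a : R) (u v : 'rV[R]_n) :
  dotp v (a *: u) = a * dotp v u.
Proof. by rewrite dotpC dotpZl dotpC. Qed.

Lemma dotpNr (R : realType) n (u v : 'rV[R]_n) : dotp v (- u) = - dotp v u.
Proof. by rewrite dotpC dotpNl dotpC. Qed.

Lemma dotpBr (R : realType) n (u w v : 'rV[R]_n) :
  dotp v (u - w) = dotp v u - dotp v w.
Proof. by rewrite dotpDr dotpNr. Qed.

Lemma dotp_ge0 (R : realType) n (u : 'rV[R]_n) : 0 <= dotp u u.
Proof. by apply: sumr_ge0 => i _; rewrite -expr2 sqr_ge0. Qed.

Lemma enorm_ge0 (R : realType) n (u : 'rV[R]_n) : 0 <= enorm u.
Proof. exact: sqrtr_ge0. Qed.

Lemma enorm_sq (R : realType) n (u : 'rV[R]_n) : enorm u ^+ 2 = dotp u u.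
Proof. by rewrite /enorm sqr_sqrtr // dotp_ge0. Qed.

Lemma enormZ (R : realType) n (a : R) (u : 'rV[R]_n) :
  enorm (a *: u) = `|a| * enorm u.
Proof.
by rewrite /enorm dotpZl dotpZr mulrA -expr2 sqrtrM ?sqr_ge0 // sqrtr_sqr.
Qed.

Lemma enormN (R : realType) n (u : 'rV[R]_n) : enorm (- u) = enorm u.
Proof. by rewrite -scaleN1r enormZ normrN1 mul1r. Qed.

Lemma enormB (R : realType) n (u v : 'rV[R]_n) : enorm (u - v) = enorm (v - u).
Proof. by rewrite -enormN opprB. Qed.

Lemma dotp0_eq0 (R : realType) n (u v : 'rV[R]_n) : dotp u u = 0 -> dotp u v = 0.
Proof.
move=> /eqP; rewrite psumr_eq0; last by move=> i _; rewrite -expr2 sqr_ge0.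
move=> /allP H; apply: big1 => i _.
have := H i (mem_index_enum i); rewrite implyTb -expr2 sqrf_eq0 => /eqP ->.
by rewrite mul0r.
Qed.

Lemma CS (R : realType) n (u v : 'rV[R]_n) : dotp u v <= enorm u * enorm v.
Proof.
set a := enorm u; set b := enorm v.
have ha : 0 <= a := enorm_ge0 u. have hb : 0 <= b := enorm_ge0 v.
have Ha : dotp u u = a ^+ 2 by rewrite enorm_sq.
have Hb : dotp v v = b ^+ 2 by rewrite enorm_sq.
have H := dotp_ge0 (b *: u - a *: v).
rewrite !(dotpBl, dotpBr, dotpZl, dotpZr) Ha Hb (dotpC v u) in H.
have [a0|apos] := eqVneq a 0.
  by rewrite dotp0_eq0 ?Ha ?a0 ?expr0n ?mul0r.
have [b0|bpos] := eqVneq b 0.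
  by rewrite dotpC dotp0_eq0 ?Hb ?b0 ?expr0n ?mulr0.
have ab : 0 < a * b by rewrite mulr_gt0 // lt_def ?apos ?bpos.
have : a * b * dotp u v <= a * b * (a * b) by nra.
by rewrite ler_pM2l.
Qed.

Lemma CSabs (R : realType) n (u v : 'rV[R]_n) : `|dotp u v| <= enorm u * enorm v.
Proof.
rewrite ler_norml CS andbT lerNl -dotpNl -(enormN u); exact: CS.
Qed.

Lemma enormD (R : realType) n (u v : 'rV[R]_n) : enorm (u + v) <= enorm u + enorm v.
Proof.
rewrite -(ler_pXn2r (n:=2)) // ?nnegrE ?addr_ge0 ?enorm_ge0 //.
rewrite enorm_sq !(dotpDl, dotpDr) (dotpC v u) sqrrD -!enorm_sq.
have := CS u v; lra.
Qed.
Lemma smallt (R : realType) (a b : R) :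
  (forall t, 0 < t < 1 -> 0 <= a + t * b) -> 0 <= b -> 0 <= a.
Proof.
move=> H hb; rewrite leNgt; apply/negP => ha.
have hba : 0 < b - a by lra.
pose t := - a / (2 * (b - a)).
have Et : t * (2 * (b - a)) = - a by rewrite /t mulfVK // mulf_neq0 // gt_eqF.
have t0 : 0 < t by rewrite /t divr_gt0 // ?oppr_gt0 // mulr_gt0.
have t1 : t < 1 by nra.
have := H t; rewrite t0 t1 => /(_ isT); nra.
Qed.

Lemma prox_fin (R : realType) n (g : 'rV[R]_n -> \bar R) gamma x p :
  proper_efun g -> is_prox g gamma x p -> g p = (fine (g p))%:E.
Proof.
move=> [Hn [v Hv]] Hp; rewrite fineK // fin_numE Hn /=.
apply/negP => /eqP gp; have := Hp v; rewrite gp.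
have [r ->] : exists r : R, g v = r%:E.
  move: (Hn v) Hv; case: (g v) => // r _ _; by exists r.
by rewrite addye //= -EFinD leye_eq.
Qed.

Lemma prox_VI (R : realType) n (g : 'rV[R]_n -> \bar R) gamma x p v gp gv :
  0 < gamma -> convex_efun g -> is_prox g gamma x p ->
  g p = gp%:E -> g v = gv%:E ->
  gamma * gp <= gamma * gv + dotp (p - x) (v - p).
Proof.
move=> g0 Hc Hp Ep Ev.
suff : 0 <= gamma * (gv - gp) + dotp (p - x) (v - p) by lra.
apply: (smallt (b := dotp (v - p) (v - p) / 2)); last by rewrite divr_ge0 // dotp_ge0.
move=> t /andP[t0 t1].
have H1 := Hp (t *: v + (1 - t) *: p).
have H2 := Hc v p t; rewrite t0 t1 /= in H2; have := H2 isT => {}H2.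
have E : t *: v + (1 - t) *: p - x = (p - x) + t *: (v - p).
  by apply/rowP => i; rewrite !mxE; ring.
rewrite E !enorm_sq Ep Ev in H1 H2.
have H3 := le_trans H1 (leeD2r _ H2).
rewrite -!EFinM -!EFinD lee_fin in H3.
move: H3; move: (p - x) (v - p) => a b H3.
rewrite (dotpDl a) !(dotpDr a) !(dotpZl, dotpZr) (dotpC b a) in H3.
set A := dotp a a in H3 *; set c := dotp a b in H3 *; set B := dotp b b in H3 *.
set u := (2 * gamma)^-1 in H3.
have : 0 <= t * (gamma * (gv - gp) + c + t * (B / 2)).
  have -> : t * (gamma * (gv - gp) + c + t * (B / 2)) =
     gamma * ((t * gv + (1 - t) * gp + (A + t * c + (t * c + t * (t * B))) * u)
             - (gp + A * u)) .
    rewrite /u; field; rewrite gt_eqF //.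
  by apply: mulr_ge0; [exact: ltW | rewrite subr_ge0].
by rewrite pmulr_rge0.
Qed.
Local Open Scope classical_set_scope.
Lemma line_derive (R : realType) (n : nat) (f : 'rV[R]_n -> R) gradf
  (Hf : is_gradient f gradf) (x d : 'rV[R]_n) (t : R) :
  is_derive t 1 (fun s : R => f (x + s *: d)) (dotp (gradf (x + t *: d)) d).
Proof.
have dl : is_diff t (cst x + ( *:%R ^~ d)) (0 + ( *:%R ^~ d)) by exact: is_diffD.
have [df dfE] := Hf (x + t *: d).
have dh : differentiable (f \o (cst x + ( *:%R ^~ d))) t.
  apply: differentiable_comp => //.
have := derivableP (diff_derivable (v:=(1:R^o)) dh).
rewrite deriveE // diff_comp //= diff_val /=.
have -> : (0 + *:%R^~ d) (1:R) = d by rewrite /= add0r scale1r.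
by rewrite dfE.
Qed.

Lemma descent (R : realType) n (f : 'rV[R]_n -> R) gradf L :
  is_gradient f gradf ->
  (forall x y, enorm (gradf x - gradf y) <= L * enorm (x - y)) -> 0 <= L ->
  forall x y, `|f y - f x - dotp (gradf x) (y - x)| <= L * enorm (y - x) ^+ 2.
Proof.
move=> Hf Hl L0 x y; set d := y - x.
have cont : {within `[0, 1], continuous (fun s : R => f (x + s *: d))}.
  apply: continuous_subspaceT => s.
  apply/differentiable_continuous/derivable1_diffP.
  have := line_derive Hf x d s; by case.
have [c c01 Ec] := MVT ltr01 (fun s _ => line_derive Hf x d s) cont.
rewrite /= scale1r scale0r addr0 subr0 mulr1 in Ec.
move: c01; rewrite in_itv /= => /andP[c0 c1].
have xd : x + d = y by rewrite /d addrC subrK.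
rewrite xd in Ec; rewrite Ec -dotpBl.
apply: le_trans (CSabs _ _) _.
have H := Hl (x + c *: d) x.
have E :  x + c *: d - x = c *: d by rewrite addrC addKr.
rewrite E enormZ (ger0_norm (ltW c0)) in H.
have hd := enorm_ge0 d.
have hg := enorm_ge0 (gradf (x + c *: d) - gradf x).
apply: le_trans (ler_wpM2r hd H) _.
have hc : c * enorm d <= enorm d by rewrite ler_piMl // ltW.
have hc2 : 0 <= enorm d - c * enorm d by rewrite subr_ge0.
have := mulr_ge0 (mulr_ge0 L0 hc2) hd; nra.
Qed.
Local Close Scope classical_set_scope.
Lemma grad_ineq (R : realType) n (f : 'rV[R]_n -> R) gradf L :
  is_gradient f gradf ->
  (forall x y, enorm (gradf x - gradf y) <= L * enorm (x - y)) -> 0 <= L ->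
  convex_fun f ->
  forall x y, f x + dotp (gradf x) (y - x) <= f y.
Proof.
move=> Hf Hl L0 Hc x y.
suff : 0 <= f y - f x - dotp (gradf x) (y - x) by lra.
apply: (smallt (b := L * enorm (y - x) ^+ 2)); last first.
  by rewrite mulr_ge0 // sqr_ge0.
move=> t /andP[t0 t1].
have H1 := Hc y x t; rewrite (ltW t0) (ltW t1) /= in H1; have {}H1 := H1 isT.
have H2 := descent Hf Hl L0 x (t *: y + (1 - t) *: x).
have E : t *: y + (1 - t) *: x - x = t *: (y - x).
  by apply/rowP => i; rewrite !mxE; ring.
rewrite E enormZ dotpZr (ger0_norm (ltW t0)) in H2.
move: H2; rewrite ler_norml => /andP[H2 _].
have : 0 <= t * (f y - f x - dotp (gradf x) (y - x) + t * (L * enorm (y - x) ^+ 2)).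
  nra.
by rewrite pmulr_rge0.
Qed.

Lemma Qbound (R : realType) n (f : 'rV[R]_n -> R) gradf L :
  is_gradient f gradf ->
  (forall x y, enorm (gradf x - gradf y) <= L * enorm (x - y)) -> 0 < L ->
  convex_fun f ->
  forall x y, enorm (gradf y - gradf x) ^+ 2 <=
     4 * L * (f y - f x - dotp (gradf x) (y - x)).
Proof.
move=> Hf Hl L0 Hc x y.
set e := gradf y - gradf x; set k := (2 * L)^-1.
have hk : k * (2 * L) = 1 by rewrite mulVf // gt_eqF // mulr_gt0.
have G := grad_ineq Hf Hl (ltW L0) Hc x (y - k *: e).
have D := descent Hf Hl (ltW L0) y (y - k *: e).
move: D; rewrite ler_norml => /andP[_ D].
have E1 : y - k *: e - x = (y - x) - k *: e.
  by apply/rowP => i; rewrite !mxE; ring.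
have E2 : y - k *: e - y = - (k *: e).
  by apply/rowP => i; rewrite !mxE; ring.
rewrite E1 dotpBr dotpZr in G.
rewrite E2 enormN enormZ dotpNr dotpZr (ger0_norm (ltW _)) in D; last first.
  by rewrite invr_gt0 mulr_gt0.
have Ee : enorm e ^+ 2 = dotp (gradf y) e - dotp (gradf x) e.
  by rewrite enorm_sq -dotpBl.
set Q := f y - f x - dotp (gradf x) (y - x).
have : k * enorm e ^+ 2 - L * k ^+ 2 * enorm e ^+ 2 <= Q.
  rewrite /Q; move: D G; rewrite Ee exprMn; nra.
have -> : k * enorm e ^+ 2 - L * k ^+ 2 * enorm e ^+ 2 = enorm e ^+ 2 / (4 * L).
  rewrite /k; field; rewrite gt_eqF //.
rewrite ler_pdivrMr ?mulr_gt0 // => H; lra.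
Qed.

Lemma coco (R : realType) n (f : 'rV[R]_n -> R) gradf L :
  is_gradient f gradf ->
  (forall x y, enorm (gradf x - gradf y) <= L * enorm (x - y)) -> 0 < L ->
  convex_fun f ->
  forall x y, enorm (gradf y - gradf x) ^+ 2 <=
     2 * L * dotp (gradf y - gradf x) (y - x).
Proof.
move=> Hf Hl L0 Hc x y.
have H1 := Qbound Hf Hl L0 Hc x y.
have H2 := Qbound Hf Hl L0 Hc y x.
rewrite (enormB (gradf x)) in H2.
have E : dotp (gradf y - gradf x) (y - x) =
  (f y - f x - dotp (gradf x) (y - x)) + (f x - f y - dotp (gradf y) (x - y)).
  rewrite dotpBl -(opprB y x) dotpNr; ring.
rewrite E; nra.
Qed.
Lemma core (R : realType) (g L e r W d FS FT K C p q : R) :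
  0 < g -> g * L <= 1 -> 0 <= L -> 0 <= e -> 0 <= r -> 0 <= W -> 0 <= d ->
  d <= g * e -> W <= C * r -> 1 <= C -> 0 <= K -> K * g <= C ->
  `|p| <= W * d -> `|q| <= e * d ->
  g * (FS - FT) <= - d ^+ 2 - p + g * q + g * L * d ^+ 2 ->
  g * (FT - FS) <= p + g * K * d ^+ 2 ->
  `|FS - FT| <= C * e * (g * e + C * r).
Proof.
move=> g0 gL L0 e0 r0 W0 d0 dge WC C1 K0 KC hp hq U Lo.
move: hp hq; rewrite !ler_norml => /andP[hp1 hp2] /andP[hq1 hq2].
have hd2 : d ^+ 2 <= g * e * d by rewrite expr2 ler_wpM2r.
have hd3 : d ^+ 2 <= (g * e) ^+ 2 by rewrite expr2 (expr2 (g * e)); nra.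
have U1 : g * (FS - FT) <= g * (W * e + g * e ^+ 2).
  have : g * L * d ^+ 2 <= d ^+ 2 by rewrite ler_piMl // sqr_ge0.
  have : W * d <= W * (g * e) by rewrite ler_wpM2l.
  have : g * q <= g * (e * (g * e)).
    rewrite ler_wpM2l ?(ltW g0) //; apply: (le_trans hq2); by rewrite ler_wpM2l.
  move=> *; nra.
have Lo1 : g * (FT - FS) <= g * (W * e + C * g * e ^+ 2).
  have : W * d <= W * (g * e) by rewrite ler_wpM2l.
  have : K * d ^+ 2 <= K * (g * e) ^+ 2 by rewrite ler_wpM2l.
  have : K * g * (g * e ^+ 2) <= C * (g * e ^+ 2).
    by rewrite ler_wpM2r // mulr_ge0 ?(ltW g0) ?sqr_ge0.
  move=> *; nra.
rewrite ler_pM2l // in U1; rewrite ler_pM2l // in Lo1.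
have We : W * e <= C * r * e by rewrite ler_wpM2r.
have Cr : C * r * e <= C * C * r * e.
  have C0 : 0 <= C := le_trans ler01 C1.
  have C2 : 0 <= C - 1 by rewrite subr_ge0.
  have := mulr_ge0 (mulr_ge0 C2 C0) (mulr_ge0 r0 e0); nra.
have ge2 : 0 <= g * e ^+ 2 by rewrite mulr_ge0 ?(ltW g0) ?sqr_ge0.
apply/andP; split; nra.
Qed.
Lemma nonexp (R : realType) n (a ee : 'rV[R]_n) (gamma L : R) :
  0 < gamma -> gamma * L <= 1 -> 0 < L ->
  enorm ee ^+ 2 <= 2 * L * dotp ee a -> enorm (a - gamma *: ee) <= enorm a.
Proof.
move=> g0 gL L0 Hco.
rewrite -(ler_pXn2r (n := 2)) // ?nnegrE ?enorm_ge0 // !enorm_sq.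
rewrite !(dotpBl, dotpBr, dotpZl, dotpZr) (dotpC a ee).
rewrite enorm_sq in Hco.
have E0 : 0 <= dotp ee ee by exact: dotp_ge0.
set E := dotp ee ee in Hco E0 *.
set c := dotp ee a in Hco *.
have c0 : 0 <= c by nra.
have h1 : gamma * E <= 2 * c.
  have := ler_wpM2l (ltW g0) Hco; nra.
nra.
Qed.
Unset Implicit Arguments.

Theorem lemma14 (R : realType) (n : nat)
  (f : 'rV[R]_n -> R) (gradf : 'rV[R]_n -> 'rV[R]_n) (g : 'rV[R]_n -> \bar R)
  (L : R)
  (Hg_convex : convex_efun g) (Hg_proper : proper_efun g) (Hg_lsc : lsc g)
  (Hf_grad : is_gradient f gradf) (HL : 0 < L)
  (Hf_lip : forall x y, enorm (gradf x - gradf y) <= L * enorm (x - y)) :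
  forall (theta H : 'rV[R]_n) (gamma : R) (T S : 'rV[R]_n),
    0 < gamma ->
    is_prox g gamma (theta - gamma *: gradf theta) T ->
    is_prox g gamma (theta - gamma *: H) S ->
    let eta := H - gradf theta in
    let bound (c : R) :=
      (1 + c * gamma * L) * enorm eta
        * (gamma * enorm eta + (1 + c * gamma * L) * enorm (theta - T)) in
    let gap := (`| ((f S)%:E + g S) - ((f T)%:E + g T) |)%E in
    [/\ enorm (T - S) <= gamma * enorm eta,
        gamma <= L^-1 -> (gap <= (bound 1)%:E)%E
      & gamma <= L^-1 -> convex_fun f -> (gap <= (bound 0)%:E)%E].
Proof.
move=> theta H gamma T S g0 HT HS eta bound gap.
have gTE := prox_fin Hg_proper HT; set gT := fine (g T) in gTE.
have gSE := prox_fin Hg_proper HS; set gS := fine (g S) in gSE.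
have VT := prox_VI (v := S) g0 Hg_convex HT gTE gSE.
have VS := prox_VI (v := T) g0 Hg_convex HS gSE gTE.
move: VT VS.
set x1 := theta - gamma *: gradf theta; set x2 := theta - gamma *: H => VT VS.
set D := T - S.
have SD : S - T = - D by rewrite opprB.
rewrite SD dotpNr in VT.
set e := enorm eta; set d := enorm D; set r := enorm (theta - T).
have e0 : 0 <= e := enorm_ge0 _.
have d0 : 0 <= d := enorm_ge0 _.
have r0 : 0 <= r := enorm_ge0 _.
have dD : dotp D D = d ^+ 2 by rewrite enorm_sq.
have hq := CSabs eta D; rewrite -/e -/d in hq.
have I0 : (S - x2) - (T - x1) = gamma *: eta - D.
  by apply/rowP => i; rewrite !mxE; ring.
have P0 : d ^+ 2 <= gamma * dotp eta D.
  have : 0 <= dotp (S - x2) D - dotp (T - x1) D by lra.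
  by rewrite -dotpBl I0 dotpBl dotpZl dD subr_ge0.
have hd : d <= gamma * e.
  have : dotp eta D <= e * d by move: hq; rewrite ler_norml => /andP[].
  move=> h; have : d ^+ 2 <= gamma * e * d.
    by apply: le_trans P0 _; rewrite -mulrA ler_wpM2l // ltW.
  rewrite expr2 => h2; have [->|dpos] := eqVneq d 0.
    by rewrite mulr_ge0 // ltW.
  rewrite -(ler_pM2r (x := d)) // lt_def dpos d0 //.
set w := (theta - T) - gamma *: (gradf theta - gradf T).
have W0 : 0 <= enorm w := enorm_ge0 _.
have A3 := descent Hf_grad Hf_lip (ltW HL) T S.
rewrite SD dotpNr enormN -/d in A3.
have main : forall K C, 0 <= K -> K * gamma <= C -> 1 <= C -> enorm w <= C * r ->
    gamma * L <= 1 -> (f T - f S <= dotp (gradf T) D + K * d ^+ 2) ->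
    (gap <= (C * e * (gamma * e + C * r))%:E)%E.
  move=> K C K0 KC C1 WC gL A4.
  rewrite /gap gTE gSE -(EFinD (f S)) -(EFinD (f T)) -EFinB /= lee_fin.
  have hp := CSabs w D; rewrite -/d in hp.
  apply: (core (p := dotp w D) (q := dotp eta D) g0 gL (ltW HL) e0 r0 W0 d0 hd WC C1 K0 KC hp hq).
  - have I1 : (S - x2) - gamma *: gradf T = - D - w + gamma *: eta.
      by apply/rowP => i; rewrite !mxE; ring.
    have E1 : dotp (S - x2) D - gamma * dotp (gradf T) D = - d ^+ 2 - dotp w D + gamma * dotp eta D.
      by rewrite -dotpZl -dotpBl I1 dotpDl (dotpZl gamma eta) (dotpBl (- D) w) (dotpNl D) dD.
    move: A3; rewrite ler_norml => /andP[_ A3].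
    have := ler_wpM2l (ltW g0) A3; nra.
  - have I2 : - (T - x1) + gamma *: gradf T = w.
      by apply/rowP => i; rewrite !mxE; ring.
    have E2 : - dotp (T - x1) D + gamma * dotp (gradf T) D = dotp w D.
      by rewrite -dotpZl -dotpNl -dotpDl I2.
    have := ler_wpM2l (ltW g0) A4; nra.
have gL : gamma <= L^-1 -> gamma * L <= 1.
  by move=> h; rewrite -ler_pdivlMr // mul1r.
split => //.
- move=> hg; apply: (main (2 * L)); rewrite ?mul1r.
  + by rewrite mulr_ge0 // ltW.
  + have := gL hg; lra.
  + by rewrite lerDl mulr_ge0 // ltW.
  + rewrite /w (le_trans (enormD _ _)) // enormN enormZ (ger0_norm (ltW g0)).
    have := Hf_lip theta T; rewrite -/r => h.
    have := ler_wpM2l (ltW g0) h; lra.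
  + exact: gL.
  + have A4 := descent Hf_grad Hf_lip (ltW HL) S T.
    rewrite -/D -/d in A4; move: A4; rewrite ler_norml => /andP[_ A4].
    have E3 : dotp (gradf S) D = dotp (gradf T) D - dotp (gradf T - gradf S) D.
      by rewrite dotpBl; ring.
    have := CSabs (gradf T - gradf S) D; rewrite ler_norml -/d => /andP[h1 _].
    have := Hf_lip T S; rewrite -/D -/d => h2.
    have := ler_wpM2r d0 h2; nra.
- move=> hg Hc; apply: (main 0); rewrite ?mul0r ?addr0 ?mul1r //.
  + have Hco := coco Hf_grad Hf_lip HL Hc T theta.
    rewrite /w /r; exact: (@nonexp _ _ _ _ gamma L g0 (gL hg) HL Hco).
  + exact: gL.
  + have A4 := grad_ineq Hf_grad Hf_lip (ltW HL) Hc T S.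
    rewrite SD dotpNr in A4; lra.
Qed.
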